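(* Consider the set of all bubbles, with output and input colours as defined in the context. Equip it with the partial composition $\mathfrak B_1\circ_i\mathfrak B_2$ given by the composition of the operad $\mathrm{CNCB}$ and defined exactly when $\mathrm{Out}(\mathfrak B_2)=\mathrm{In}_i(\mathfrak B_1)$, and add two units $\mathbf 1_1,\mathbf 1_2$ (where $\mathbf 1_c$ has arity $1$ and output and input colour $c$). This forms a $2$-coloured operad $\mathrm{Bulle}$. In particular, whenever $\mathrm{Out}(\mathfrak B_2)=\mathrm{In}_i(\mathfrak B_1)$, the $\mathrm{CNCB}$-composite $\mathfrak B_1\circ_i\mathfrak B_2$ is again a bubble.
   Context: For $n\ge2$, a bicoloured noncrossing configuration (BNC) of size $n$ is a regular polygon with $n+1$ vertices numbered $1,\dots,n+1$ clockwise, together with two disjoint sets of arcs, blue arcs and red arcs. An arc is a pair $(i,j)$ with $1\le i<j\le n+1$. The arcs $(i,i+1)$, $1\le i\le n$, are the edges ($(i,i+1)$ is the $i$th edge), $(1,n+1)$ is the base, and all other arcs are diagonals. Coloured (blue or red) arcs must be pairwise noncrossing, where $(i,j)$ and $(k,l)$ cross iff $i<k<j<l$ or $k<i<l<j$, and red arcs must be diagonals. Other arcs are uncoloured. There is one BNC of size $1$, a single blue arc. The operad $\mathrm{CNCB}$ has the BNCs as elements (arity = size). Its composition $\mathfrak C\circ_i\mathfrak D$ ($\mathfrak C$ of size $n$, $\mathfrak D$ of size $m$) glues the base of $\mathfrak D$ onto the $i$th edge of $\mathfrak C$. Arcs $(a,b)$ of $\mathfrak C$ become $(\sigma(a),\sigma(b))$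 with $\sigma(v)=v$ for $v\le i$ and $\sigma(v)=v+m-1$ for $v>i$, and arcs $(a,b)$ of $\mathfrak D$ become $(a+i-1,b+i-1)$; all keep their colours. The exception is the glued arc $(i,i+m)$, which is red if the $i$th edge of $\mathfrak C$ and the base of $\mathfrak D$ are both uncoloured, blue if both are blue, and uncoloured otherwise. A bubble is a BNC of size at least $2$ with no coloured diagonal. A BNC is based if its base is blue. For a bubble $\mathfrak B$ of size $n$, its output colour is $\mathrm{Out}(\mathfrak B)=1$ if $\mathfrak B$ is based and $2$ otherwise. Its $i$th input colour $\mathrm{In}_i(\mathfrak B)$, for $i\in[n]$, is $1$ if the $i$th edge of $\mathfrak B$ is uncoloured and $2$ if it is blue. *)

(* Defs.v *)
From mathcomp Require Import all_boot.
Set Implicit Arguments. Unset Strict Implicit. Unset Printing Implicit Defensive.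

(** A configuration of size n has vertices 1..n+1.  We represent it by its size
   and a colouring function on pairs of vertices; only pairs (i,j) with
   1 <= i < j <= n+1 (the arcs) may be coloured. *)

Inductive colour := Unc | Blue | Red.

Record bnc := mkBNC { bsz : nat; bcol : nat -> nat -> colour }.

Definition is_arc (n x y : nat) : bool := (1 <= x) && (x < y) && (y <= n.+1).
Definition is_edge (x y : nat) : bool := y == x.+1.
Definition is_base (n x y : nat) : bool := (x == 1) && (y == n.+1).
Definition is_diag (n x y : nat) : bool :=
  is_arc n x y && ~~ is_edge x y && ~~ is_base n x y.

Definition crossing (i j k l : nat) : bool :=
  ((i < k) && (k < j) && (j < l)) || ((k < i) && (i < l) && (l < j)).

Definition is_bnc (b : bnc) : Prop :=
  1 <= bsz b /\
  (forall x y, ~~ is_arc (bsz b) x y -> bcol b x y = Unc) /\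
  (forall x y, bcol b x y = Red -> is_diag (bsz b) x y) /\
  (forall x y x' y', bcol b x y <> Unc -> bcol b x' y' <> Unc ->
      ~~ crossing x y x' y') /\
  (bsz b = 1 -> bcol b 1 2 = Blue).

(* colour of the glued arc from (ith edge of C, base of D) *)
Definition glue (c1 c2 : colour) : colour :=
  match c1, c2 with
  | Unc, Unc => Red
  | Blue, Blue => Blue
  | _, _ => Unc
  end.

(* C o_i D : vertices v of C go to sigma v (v if v <= i, v + m - 1 otherwise),
   vertices a of D go to a + i - 1; arc (i, i+m) is the glued arc. *)
Definition cncb_comp (C : bnc) (i : nat) (D : bnc) : bnc :=
  let n := bsz C in let m := bsz D in
  let in_sig v := (v <= i) || (i + m <= v) in
  let siginv v := if v <= i then v else v - (m - 1) in
  mkBNC (n + m - 1) (fun x y =>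
    if (x == i) && (y == i + m) then glue (bcol C i i.+1) (bcol D 1 m.+1)
    else if in_sig x && in_sig y then bcol C (siginv x) (siginv y)
    else if (i <= x) && (y <= i + m) then bcol D (x - i + 1) (y - i + 1)
    else Unc).

Definition is_bubble (b : bnc) : Prop :=
  is_bnc b /\ 2 <= bsz b /\
  (forall x y, is_diag (bsz b) x y -> bcol b x y = Unc).

Definition is_based (b : bnc) : Prop := bcol b 1 (bsz b).+1 = Blue.

Definition bout (b : bnc) : nat :=
  match bcol b 1 (bsz b).+1 with Blue => 1 | _ => 2 end.
Definition bin (b : bnc) (j : nat) : nat :=
  match bcol b j j.+1 with Blue => 2 | _ => 1 end.

(** * Non-symmetric coloured operads, presented by partial compositions.
   Elements live in a carrier X restricted by a predicate P; colours in C
   restricted by Col; inputs are indexed 1..ar x. *)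

Definition coloured_operad {X C : Type} (Col : C -> Prop) (P : X -> Prop)
  (ar : X -> nat) (out : X -> C) (inp : X -> nat -> C)
  (comp : X -> nat -> X -> X) (unit : C -> X) : Prop :=
  (forall x, P x -> Col (out x) /\ forall j, 1 <= j <= ar x -> Col (inp x j)) /\
  (forall c, Col c -> P (unit c) /\ ar (unit c) = 1 /\ out (unit c) = c /\
                      inp (unit c) 1 = c) /\
  (forall x y i, P x -> P y -> 1 <= i <= ar x -> out y = inp x i ->
     P (comp x i y) /\ ar (comp x i y) = ar x + ar y - 1 /\
     out (comp x i y) = out x /\
     forall j, 1 <= j <= ar x + ar y - 1 ->
       inp (comp x i y) j =
         (if j < i then inp x j
          else if j < i + ar y then inp y (j - i + 1)
          else inp x (j - ar y + 1))) /\
  (forall x, P x -> comp (unit (out x)) 1 x = x) /\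
  (forall x i, P x -> 1 <= i <= ar x -> comp x i (unit (inp x i)) = x) /\
  (forall x y z i j, P x -> P y -> P z -> 1 <= i <= ar x -> 1 <= j <= ar y ->
     out y = inp x i -> out z = inp y j ->
     comp (comp x i y) (i + j - 1) z = comp x i (comp y j z)) /\
  (forall x y z i j, P x -> P y -> P z -> 1 <= i -> i < j -> j <= ar x ->
     out y = inp x i -> out z = inp x j ->
     comp (comp x i y) (j + ar y - 1) z = comp (comp x j z) i y).

Inductive belt := BUnit of nat | BBub of bnc.

Definition bulle_colour (c : nat) : Prop := c = 1 \/ c = 2.

Definition bulle_valid (x : belt) : Prop :=
  match x with BUnit c => bulle_colour c | BBub b => is_bubble b end.

Definition bulle_ar (x : belt) : nat :=
  match x with BUnit _ => 1 | BBub b => bsz b end.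

Definition bulle_out (x : belt) : nat :=
  match x with BUnit c => c | BBub b => bout b end.

Definition bulle_in (x : belt) (j : nat) : nat :=
  match x with BUnit c => c | BBub b => bin b j end.

Definition bulle_comp (x : belt) (i : nat) (y : belt) : belt :=
  match x, y with
  | BUnit _, _ => y
  | _, BUnit _ => x
  | BBub b1, BBub b2 => BBub (cncb_comp b1 i b2)
  end.

Definition bulle_unit (c : nat) : belt := BUnit c.

(* Main.v *)
Require Import Defs.
From mathcomp Require Import all_boot.
From mathcomp Require Import zify.
From Stdlib Require Import FunctionalExtensionality.

Ltac pick c := lazymatch c with
 | ?c1 && ?c2 => pick c1 | ?c1 || ?c2 => pick c1 | ~~ ?c1 => pick c1 | _ => c end.

Ltac split_ifs := repeat (match goal with |- context [if ?c then _ else _] =>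
   lazymatch c with context[if _ then _ else _] => fail | _ =>
   let t0 := pick c in
   let E := fresh "E" in case E: t0; rewrite /=; try (exfalso; lia) end end).

Definition unc_out (n : nat) (f : nat -> nat -> colour) :=
  forall u v, ~~ is_arc n u v -> f u v = Unc.

Ltac unc_rw := repeat match goal with
  | H : unc_out ?n ?f |- context [?f ?p ?q] =>
      rewrite (H p q); [| rewrite /is_arc; lia] end.

Ltac leaf := unc_rw; try reflexivity; repeat match goal with
  | |- glue _ _ = glue _ _ => congr glue
  | |- ?f _ _ = ?f _ _ => congr (f _ _); lia
end.

Lemma bnc_ext (A B : bnc) : bsz A = bsz B -> (forall a b, bcol A a b = bcol B a b) -> A = B.
Proof.
case: A => n f; case: B => m g /= -> H; f_equal.
by apply: functional_extensionality => a; apply: functional_extensionality => b.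
Qed.

Lemma seq_col (n m p : nat) (x y z : nat -> nat -> colour) i j a b :
  unc_out n x -> unc_out m y -> unc_out p z ->
  2 <= n -> 2 <= m -> 2 <= p -> 1 <= i <= n -> 1 <= j <= m ->
  bcol (cncb_comp (cncb_comp (mkBNC n x) i (mkBNC m y)) (i + j - 1) (mkBNC p z)) a b =
  bcol (cncb_comp (mkBNC n x) i (cncb_comp (mkBNC m y) j (mkBNC p z))) a b.
Proof.
move=> hx hy hz *; rewrite /cncb_comp /=.
split_ifs; leaf.
Qed.

Lemma par_col (n m p : nat) (x y z : nat -> nat -> colour) i j a b :
  unc_out n x -> unc_out m y -> unc_out p z ->
  2 <= n -> 2 <= m -> 2 <= p -> 1 <= i -> i < j -> j <= n ->
  bcol (cncb_comp (cncb_comp (mkBNC n x) i (mkBNC m y)) (j + m - 1) (mkBNC p z)) a b =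
  bcol (cncb_comp (cncb_comp (mkBNC n x) j (mkBNC p z)) i (mkBNC m y)) a b.
Proof.
move=> hx hy hz *; rewrite /cncb_comp /=.
split_ifs; leaf.
Qed.

Definition shape (n u v : nat) : Prop :=
  1 <= u /\ u < v /\ v <= n.+1 /\ (v = u.+1 \/ (u = 1 /\ v = n.+1)).

Lemma bub_facts (B : bnc) : is_bubble B ->
  unc_out (bsz B) (bcol B) /\
  (forall u v, bcol B u v <> Unc -> shape (bsz B) u v) /\
  (forall u v, bcol B u v <> Red).
Proof.
case=> [[h1 [h2 [h3 [h4 h5]]]] [h6 h7]].
have sh : forall u v, bcol B u v <> Unc -> shape (bsz B) u v.
  move=> u v H.
  have A : is_arc (bsz B) u v.
    by apply/negPn/negP => /h2.
  have D : ~~ is_diag (bsz B) u v by apply/negP => /h7.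
  move: A D; rewrite /is_diag /is_arc /is_edge /is_base /shape; lia.
split; first exact: h2.
split; first exact: sh.
move=> u v E; have := h3 _ _ E; move/h7; by rewrite E.
Qed.

Lemma comp_char (n m : nat) (x y : nat -> nat -> colour) i a b :
  2 <= n -> 2 <= m -> 1 <= i <= n ->
  (forall u v, x u v <> Unc -> shape n u v) -> (forall u v, x u v <> Red) ->
  (forall u v, y u v <> Unc -> shape m u v) -> (forall u v, y u v <> Red) ->
  glue (x i i.+1) (y 1 m.+1) = Unc ->
  let c := bcol (cncb_comp (mkBNC n x) i (mkBNC m y)) a b in
  c = Unc \/ (c <> Red /\ shape (n + m - 1) a b).
Proof.
move=> hn hm hi sx rx sy ry hg /=; rewrite hg.
split_ifs; try by left.
all: match goal with
 | |- ?f ?u ?v = Unc \/ _ =>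
   let E := fresh "Ec" in case E: (f u v);
   [ by left
   | right; split => //;
     first [ (move: (sx u v ltac:(by rewrite E)))
           | (move: (sy u v ltac:(by rewrite E))) ];
     rewrite /shape; lia
   | exfalso; first [ exact: (rx u v E) | exact: (ry u v E) ] ]
 end.
Qed.

Lemma comp_bubble B1 B2 i : is_bubble B1 -> is_bubble B2 -> 1 <= i <= bsz B1 ->
  bout B2 = bin B1 i -> is_bubble (cncb_comp B1 i B2).
Proof.
move=> b1 b2 hi hc.
have [u1 [s1 r1]] := bub_facts _ b1. have [u2 [s2 r2]] := bub_facts _ b2.
have n1 : 2 <= bsz B1 by case: b1 => _ [].
have n2 : 2 <= bsz B2 by case: b2 => _ [].
move: b1 b2 hi hc u1 s1 r1 u2 s2 r2 n1 n2.
case: B1 => n x; case: B2 => m y /= b1 b2 hi hc u1 s1 r1 u2 s2 r2 n1 n2.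
have hg : glue (x i i.+1) (y 1 m.+1) = Unc.
  by move: hc; rewrite /bout /bin /=; case: (x i i.+1); case: (y 1 m.+1).
have ch := fun a b => comp_char n m x y i a b n1 n2 hi s1 r1 s2 r2 hg.
have hs : bsz (cncb_comp (mkBNC n x) i (mkBNC m y)) = n + m - 1 by [].
rewrite /is_bubble /is_bnc hs.
split; [split; [lia|split; [|split; [|split]]] | split; [lia|]].
- move=> a b NA; case: (ch a b) => [//|[_ S]]; move: NA S; rewrite /is_arc/shape; lia.
- move=> a b R; case: (ch a b) => [E|[E _]]; by rewrite R in E.
- move=> a b a' b' H1 H2.
  case: (ch a b) => [//|[_ S1]]; case: (ch a' b') => [//|[_ S2]].
  move: S1 S2; rewrite /shape /crossing; lia.
- move=> H; exfalso; lia.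
- move=> a b D; case: (ch a b) => [//|[_ S]]; move: D S.
  rewrite /is_diag /is_arc /is_edge /is_base /shape; lia.
Qed.

Lemma out_col (n m : nat) (x y : nat -> nat -> colour) i :
  2 <= n -> 2 <= m -> 1 <= i <= n ->
  bcol (cncb_comp (mkBNC n x) i (mkBNC m y)) 1 (n + m - 1).+1 = x 1 n.+1.
Proof. move=> *; rewrite /cncb_comp /=; split_ifs; leaf. Qed.

Lemma in_col (n m : nat) (x y : nat -> nat -> colour) i j :
  2 <= n -> 2 <= m -> 1 <= i <= n -> 1 <= j <= n + m - 1 ->
  bcol (cncb_comp (mkBNC n x) i (mkBNC m y)) j j.+1 =
  if j < i then x j j.+1 else if j < i + m then y (j - i + 1) (j - i + 1).+1
  else x (j - m + 1) (j - m + 1).+1.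
Proof. move=> *; rewrite /cncb_comp /=; split_ifs; leaf. Qed.

Theorem proposition2p2 :
  coloured_operad bulle_colour bulle_valid bulle_ar bulle_out bulle_in
    bulle_comp bulle_unit /\
  (forall (B1 B2 : bnc) (i : nat), is_bubble B1 -> is_bubble B2 ->
     1 <= i <= bsz B1 -> bout B2 = bin B1 i ->
     is_bubble (cncb_comp B1 i B2)).
Proof.
have bf : forall b, is_bubble b -> 2 <= bsz b /\ unc_out (bsz b) (bcol b).
  move=> b hb; split; [by case: hb => _ [] | by case: (bub_facts _ hb)].
split; last exact: comp_bubble.
split.
{ case=> [c|b] /= H; split.
  - exact H.
  - by move=> *.
  - rewrite /bulle_colour /bout; case: (bcol b 1 (bsz b).+1); auto.
  - move=> j _; rewrite /bulle_colour /bin; case: (bcol b j j.+1); auto. }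
split.
{ move=> c Hc; by repeat split. }
split.
{ case=> [c|X]; case=> [d|Y] i /= HX HY Hi Ho.
  - split=>//; split; first lia; split=>//.
    move=> j hj; have ej : j = 1 by lia.
    have ei : i = 1 by lia.
    by subst j i.
  - split=>//; split; first lia; split=>//.
    move=> j hj; have ei : i = 1 by lia.
    subst i.
    rewrite ifF; last lia. rewrite ifT; last lia. congr bin; lia.
  - split=>//; split; first lia; split=>//.
    move=> j hj; case: ifP => // h1; case: ifP => h2.
    + have -> : j = i by lia. by rewrite Ho.
    + congr bin; lia.
  - have [nX uX] := bf _ HX. have [nY uY] := bf _ HY.
    split; first exact: comp_bubble. split=>//.
    move: HX HY Hi Ho nX nY uX uY; case: X => n x; case: Y => m y /= HX HY Hi Ho nX nY uX uY.
    split.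
    + by rewrite /bout (_ : bsz (cncb_comp _ _ _) = n + m - 1) // out_col.
    + move=> j hj; rewrite /bin in_col //.
      case: (j < i) => //; case: (j < i + m) => //. }
split; first by case.
split; first by move=> x i; case: x.
split.
{ move=> x y z i j; case: x => [c|X]; case: y => [d|Y]; case: z => [e|Z] /= HX HY HZ Hi Hj Ho1 Ho2.
  all: try done; try (congr (BBub (cncb_comp _ _ _)); lia).
  have [nX uX] := bf _ HX. have [nY uY] := bf _ HY. have [nZ uZ] := bf _ HZ.
  move: HX HY HZ Ho1 Ho2 Hi Hj nX nY nZ uX uY uZ; case: X => n x; case: Y => m y; case: Z => p z /= HX HY HZ Ho1 Ho2 Hi Hj nX nY nZ uX uY uZ.
  congr BBub; apply: bnc_ext; first by rewrite /=; lia.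
  move=> a b; exact: seq_col. }
{ move=> x y z i j; case: x => [c|X]; case: y => [d|Y]; case: z => [e|Z] /= HX HY HZ Hi Hij Hj Ho1 Ho2.
  all: try (exfalso; lia).
  all: try done; try (congr (BBub (cncb_comp _ _ _)); lia).
  have [nX uX] := bf _ HX. have [nY uY] := bf _ HY. have [nZ uZ] := bf _ HZ.
  move: HX HY HZ Ho1 Ho2 Hi Hij Hj nX nY nZ uX uY uZ; case: X => n x; case: Y => m y; case: Z => p z /= HX HY HZ Ho1 Ho2 Hi Hij Hj nX nY nZ uX uY uZ.
  congr BBub; apply: bnc_ext; first by rewrite /=; lia.
  move=> a b; exact: par_col. }
Qed.
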